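(* Let $f_1,\dots,f_n:\mathbb{R}^d\to\mathbb{R}$ be smooth with $e^{-f_i}$ probability densities and $\int e^{-\beta f_i}dx<\infty$ for all $\beta>0$; let $w_1,\dots,w_n>0$, $\sum_iw_i=1$, $w_{\min}=\min_iw_i$, $f=-\ln\sum_iw_ie^{-f_i}$, and for $0<\beta\le1$ let $p_\beta=e^{-\beta f}/\int e^{-\beta f}$. Fix $\beta\in(0,1]$ and suppose $Z_\beta:=\int e^{-\beta f_1}dx=\cdots=\int e^{-\beta f_n}dx$ (e.g. gaussians of equal variance). Suppose each $\tilde p_{\beta,i}=e^{-\beta f_i}/Z_\beta$ satisfies a Poincaré inequality with constant $C_\beta$. Then $p_\beta$ satisfies a Poincaré inequality with constant $\frac{2C_\beta}{w_{\min}}$ on sets of measure $\le\frac{w_{\min}^2}{2}$.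
   Context: For a probability density $p$ on $\mathbb{R}^d$, $\mathcal E_p(g)=\int\|\nabla g\|^2p\,dx$, $\operatorname{Var}_p(g)=\int g^2p-(\int gp)^2$, with $g$ locally Lipschitz and $\int g^2 p<\infty$. $p$ satisfies a Poincaré inequality with constant $C$ if $\mathcal E_p(g)\ge\frac1C\operatorname{Var}_p(g)$ for all such $g$; it satisfies one on sets of measure $\le m$ if this holds for all such $g$ with $p(\operatorname{Supp}(g))\le m$. *)

(* Defs.v *)
From HB Require Import structures.
From mathcomp Require Import all_boot all_order all_algebra.
From mathcomp Require Import all_classical all_reals all_analysis.
Set Implicit Arguments. Unset Strict Implicit. Unset Printing Implicit Defensive.
Import Order.TTheory GRing.Theory Num.Theory.
Import numFieldNormedType.Exports.
Local Open Scope classical_set_scope.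
Local Open Scope ring_scope.

(* R^d is 'rV[R]_d (row vectors); as a measurable space it carries its Borel
   sigma-algebra (generated by the open sets of 'rV[R]_d). *)
Definition Rd (R : realType) (d : nat) := g_sigma_algebraType (@open 'rV[R]_d).

Definition box (R : realType) d (a b : 'rV[R]_d) : set (Rd R d) :=
  [set x : 'rV[R]_d | forall i, a ord0 i <= x ord0 i <= b ord0 i].

(* lam is the Lebesgue measure on the Borel sets of R^d : it gives every
   closed box its volume (this determines it uniquely). *)
Definition is_lebesgue (R : realType) d (lam : {measure set (Rd R d) -> \bar R}) :=
  forall a b : 'rV[R]_d, (forall i, a ord0 i <= b ord0 i) ->
    lam (box a b) = (\prod_(i < d) (b ord0 i - a ord0 i))%:E.

Definition evec (R : realType) d (i : 'I_d) : 'rV[R]_d := delta_mx ord0 i.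
Definition partial (R : realType) d (i : 'I_d) (g : 'rV[R]_d -> R) (x : 'rV[R]_d) : R :=
  'D_(evec R i) g x.

Definition grad_norm2 (R : realType) d (g : 'rV[R]_d -> R) (x : 'rV[R]_d) : R :=
  \sum_(i < d) (partial i g x) ^+ 2.

Fixpoint iter_dir (R : realType) d (vs : seq 'rV[R]_d) (f : 'rV[R]_d -> R)
  : 'rV[R]_d -> R :=
  match vs with
  | [::] => f
  | v :: vs' => fun x => 'D_v (iter_dir vs' f) x
  end.
Definition smooth (R : realType) d (f : 'rV[R]_d -> R) :=
  forall (vs : seq 'rV[R]_d) (x : 'rV[R]_d), differentiable (iter_dir vs f) x.

Definition locally_lipschitz (R : realType) d (g : 'rV[R]_d -> R) :=
  forall x : 'rV[R]_d, exists r : R, exists L : R, 0 < r /\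
    forall y z, ball x r y -> ball x r z -> `|g y - g z| <= L * `|y - z|.

Definition energy (R : realType) d (lam : {measure set (Rd R d) -> \bar R})
  (p : 'rV[R]_d -> R) (g : 'rV[R]_d -> R) : \bar R :=
  (\int[lam]_x (grad_norm2 g x * p x)%:E)%E.

Definition variance (R : realType) d (lam : {measure set (Rd R d) -> \bar R})
  (p : 'rV[R]_d -> R) (g : 'rV[R]_d -> R) : \bar R :=
  (\int[lam]_x (g x ^+ 2 * p x)%:E
    - (\int[lam]_x (g x * p x)%:E) ^+ 2)%E.

Definition admissible (R : realType) d (lam : {measure set (Rd R d) -> \bar R})
  (p : 'rV[R]_d -> R) (g : 'rV[R]_d -> R) :=
  locally_lipschitz g /\ (\int[lam]_x (g x ^+ 2 * p x)%:E < +oo)%E.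

Definition supp (R : realType) d (g : 'rV[R]_d -> R) : set (Rd R d) :=
  closure [set x : 'rV[R]_d | g x != 0].

Definition dmeasure (R : realType) d (lam : {measure set (Rd R d) -> \bar R})
  (p : 'rV[R]_d -> R) (A : set (Rd R d)) : \bar R :=
  (\int[lam]_(x in A) (p x)%:E)%E.

Definition poincare (R : realType) d (lam : {measure set (Rd R d) -> \bar R})
  (p : 'rV[R]_d -> R) (C : R) :=
  forall g, admissible lam p g ->
    ((C^-1)%:E * variance lam p g <= energy lam p g)%E.

Definition poincare_small_sets (R : realType) d
  (lam : {measure set (Rd R d) -> \bar R}) (p : 'rV[R]_d -> R) (C m : R) :=
  forall g, admissible lam p g -> (dmeasure lam p (supp g) <= m%:E)%E ->
    ((C^-1)%:E * variance lam p g <= energy lam p g)%E.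

(* minimum of the weights (all weights lie in (0,1], so 1 is a neutral element) *)
Definition wmin (R : realType) n (w : 'I_n -> R) : R := \big[Num.min/1]_(i < n) w i.

Definition mixture_potential (R : realType) d n (w : 'I_n -> R)
  (fs : 'I_n -> 'rV[R]_d -> R) (x : 'rV[R]_d) : R :=
  - ln (\sum_(i < n) w i * expR (- fs i x)).

Definition tempered_density (R : realType) d (lam : {measure set (Rd R d) -> \bar R})
  (f : 'rV[R]_d -> R) (beta : R) (x : 'rV[R]_d) : R :=
  expR (- (beta * f x)) / fine (\int[lam]_y (expR (- (beta * f y)))%:E)%E.

(* Main.v *)
Require Import Defs.
From HB Require Import structures.
From mathcomp Require Import all_boot all_order all_algebra.
From mathcomp Require Import all_classical all_reals all_analysis.
From mathcomp Require Import measurable_realfun.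
From mathcomp Require Import ring lra.
Import Order.TTheory GRing.Theory Num.Theory.
Import numFieldNormedType.Exports.
Local Open Scope classical_set_scope.
Local Open Scope ring_scope.

Module Helpers.
Set Implicit Arguments. Unset Strict Implicit. Unset Printing Implicit Defensive.

Section gen.
Context d (T : measurableType d) (R : realType).
Variable mu : {measure set T -> \bar R}.
Local Open Scope ereal_scope.
Import HBNNSimple.

Lemma int_mono (F1 F2 : T -> R) : (forall x, (0 <= F1 x)%R) ->
  (forall x, (F1 x <= F2 x)%R) ->
  \int[mu]_x (F1 x)%:E <= \int[mu]_x (F2 x)%:E.
Proof.
move=> h0 h12.
have h20 x : (0 <= F2 x)%R by apply: le_trans (h12 x).
rewrite ge0_integralTE; last by move=> x; rewrite lee_fin.
rewrite ge0_integralTE; last by move=> x; rewrite lee_fin.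
apply: ge_ereal_sup => _ [h hle <-]; apply: ereal_sup_ubound; exists h => //= x.
by apply: le_trans (hle x) _; rewrite lee_fin.
Qed.

Lemma int_scale_le (c : R) (F : T -> R) : (0 < c)%R -> (forall x, (0 <= F x)%R) ->
  \int[mu]_x (c * F x)%:E <= c%:E * \int[mu]_x (F x)%:E.
Proof.
move=> c0 F0.
have cF0 x : (0 <= c * F x)%R by apply: mulr_ge0; [exact: ltW|exact: F0].
rewrite ge0_integralTE; last by move=> x; rewrite lee_fin cF0.
apply: ge_ereal_sup => _ [h hle <-].
have ic0 : (0 <= c^-1)%R by rewrite invr_ge0 ltW.
pose h' := scale_nnsfun h ic0.
have -> : sintegral mu h = c%:E * sintegral mu h'.
  rewrite /h' (_ : sintegral mu (scale_nnsfun h ic0) = sintegral mu (cst c^-1 \* h)%R) //.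
  by rewrite sintegralrM muleA -EFinM mulfV ?gt_eqF// mul1e.
rewrite lee_pmul2l ?lte_fin//.
rewrite ge0_integralTE; last by move=> x; rewrite lee_fin F0.
apply: ereal_sup_ubound; exists h' => //= x.
have := hle x; rewrite /= !lee_fin => hx.
by rewrite ler_pdivrMl// .
Qed.

Lemma int_scale (c : R) (F : T -> R) : (0 < c)%R -> (forall x, (0 <= F x)%R) ->
  \int[mu]_x (c * F x)%:E = c%:E * \int[mu]_x (F x)%:E.
Proof.
move=> c0 F0; apply/eqP; rewrite eq_le int_scale_le //=.
have cF0 x : (0 <= c * F x)%R by apply: mulr_ge0; [exact: ltW|exact: F0].
have ic0 : (0 < c^-1)%R by rewrite invr_gt0.
have := int_scale_le ic0 cF0.
under eq_integral do rewrite mulrA mulVf ?gt_eqF// mul1r.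
move=> h; rewrite -(@lee_pmul2l _ c^-1%:E) ?lte_fin//.
by rewrite muleA -EFinM mulVf ?gt_eqF// mul1e.
Qed.

Lemma sint_le_int (h : {nnsfun T >-> R}) (F : T -> R) :
  (forall x, (0 <= F x)%R) -> (forall x, (h x <= F x)%R) ->
  sintegral mu h <= \int[mu]_x (F x)%:E.
Proof.
move=> F0 hF; rewrite ge0_integralTE; last by move=> x; rewrite lee_fin F0.
by apply: ereal_sup_ubound; exists h => //= x; rewrite lee_fin.
Qed.

Lemma int_superadd (F1 F2 : T -> R) : (forall x, (0 <= F1 x)%R) ->
  (forall x, (0 <= F2 x)%R) ->
  \int[mu]_x (F1 x)%:E + \int[mu]_x (F2 x)%:E <= \int[mu]_x (F1 x + F2 x)%:E.
Proof.
move=> h1 h2.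
have h12 x : (0 <= F1 x + F2 x)%R by rewrite addr_ge0.
set S := \int[mu]_x (F1 x + F2 x)%:E.
have S0 : 0 <= S by apply: integral_ge0 => x _; rewrite lee_fin.
have [Sy|Sfin] := eqVneq S +oo; first by rewrite Sy leey.
have SS : S \is a fin_num by rewrite ge0_fin_numE // ltey.
have I2 : \int[mu]_x (F2 x)%:E \is a fin_num.
  rewrite ge0_fin_numE; last by apply: integral_ge0 => x _; rewrite lee_fin.
  apply: le_lt_trans (_ : _ <= S) _; last by rewrite ltey.
  by apply: int_mono => // x; rewrite lerDr.
rewrite -leeBrDr //.
rewrite [X in X <= _]ge0_integralTE; last by move=> x; rewrite lee_fin.
apply: ge_ereal_sup => _ [g1 g1le <-].
have g1fin : sintegral mu g1 \is a fin_num.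
  rewrite ge0_fin_numE; last exact: sintegral_ge0.
  apply: le_lt_trans (_ : _ <= S) _; last by rewrite ltey.
  apply: sint_le_int => // x.
  by have := g1le x; rewrite lee_fin => /le_trans; apply; rewrite lerDl.
rewrite leeBrDr // addeC -leeBrDr //.
rewrite [X in X <= _]ge0_integralTE; last by move=> x; rewrite lee_fin.
apply: ge_ereal_sup => _ [g2 g2le <-].
rewrite leeBrDl // -sintegralD.
have := @sint_le_int (add_nnsfun g1 g2) (fun x => F1 x + F2 x)%R h12; apply => x /=.
by apply: lerD; rewrite -lee_fin; [exact: g1le|exact: g2le].
Qed.

Lemma int_superadd_sum (I : Type) (s : seq I) (F : I -> T -> R) :
  (forall i x, (0 <= F i x)%R) ->
  \sum_(i <- s) \int[mu]_x (F i x)%:E <= \int[mu]_x (\sum_(i <- s) F i x)%:E.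
Proof.
move=> F0; elim: s => [|i s ih].
  rewrite big_nil; apply: integral_ge0 => x _; rewrite big_nil lee_fin //.
rewrite big_cons.
have -> : \int[mu]_x (\sum_(i0 <- i :: s) F i0 x)%:E =
   \int[mu]_x (F i x + \sum_(j <- s) F j x)%:E.
  by apply: eq_integral => x _; rewrite big_cons.
apply: le_trans (int_superadd _ _) => //; last first.
  by move=> x; apply: sumr_ge0.
by apply: leeD.
Qed.

End gen.


Lemma amgm_sq (R : realType) (a b : R) : 0 <= a -> 0 <= b ->
  (forall s, 0 < s -> b <= a / (2 * s) + s / 4) -> b ^+ 2 <= a / 2.
Proof.
move=> a0 b0 h.
have [a00|apos] := eqVneq a 0.
  subst a.
  have : b <= 0.
    apply/ler_addgt0Pr => e e0; rewrite add0r.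
    have := h (4 * e); rewrite mul0r add0r (mulrC 4 e) mulfK ?pnatr_eq0 //.
    by apply; rewrite mulr_gt0.
  move=> b00; have -> : b = 0 by apply/le_anti; rewrite b00 b0.
  by rewrite expr0n /= mul0r.
have ap : 0 < a by rewrite lt_def apos a0.
set s := Num.sqrt (2 * a).
have s0 : 0 < s by rewrite sqrtr_gt0 mulr_gt0.
have ss : s ^+ 2 = 2 * a by rewrite sqr_sqrtr // mulr_ge0.
have := h s s0.
have -> : a / (2 * s) + s / 4 = s / 2.
  have -> : a = s ^+ 2 / 2 by rewrite ss mulrC mulKf // pnatr_eq0.
  field; rewrite gt_eqF //.
move=> bs.
have : b ^+ 2 <= (s / 2) ^+ 2 by rewrite lerXn2r // ?nnegrE ?divr_ge0 // ltW.
rewrite expr_div_n ss => /le_trans; apply.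
by have -> : 2 * a / 2 ^+ 2 = a / 2 by field.
Qed.


Section KL.
Context d (T : measurableType d) (R : realType).
Variable mu : {measure set T -> \bar R}.

Lemma KL (q g : T -> R) (S : set T) (C : R) (E : \bar R) :
  measurable_fun setT q -> measurable_fun setT g -> measurable S ->
  (forall x, 0 <= q x) -> (forall x, g x != 0 -> S x) -> 0 < C ->
  (\int[mu]_x (g x ^+ 2 * q x)%:E < +oo)%E ->
  (\int[mu]_x (\1_S x * q x)%:E <= (2^-1)%:E)%E ->
  ((C^-1)%:E * (\int[mu]_x (g x ^+ 2 * q x)%:E - (\int[mu]_x (g x * q x)%:E) ^+ 2)
     <= E)%E ->
  (\int[mu]_x (g x ^+ 2 * q x)%:E <= (2 * C)%:E * E)%E.
Proof.
move=> mq mg mS q0 gS C0 Afin mle hP.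
set A := (\int[mu]_x (g x ^+ 2 * q x)%:E)%E in Afin hP *.
set B := (\int[mu]_x (g x * q x)%:E)%E in hP.
set m := (\int[mu]_x (\1_S x * q x)%:E)%E in mle.
have A0 : (0 <= A)%E by apply: integral_ge0 => x _; rewrite lee_fin mulr_ge0 // sqr_ge0.
have Af : A \is a fin_num by rewrite ge0_fin_numE.
set a := fine A.
have Aa : A = a%:E by rewrite /a fineK.
have a0 : 0 <= a by rewrite -lee_fin -Aa.
have m0 : (0 <= m)%E.
  by apply: integral_ge0 => x _; rewrite lee_fin mulr_ge0 // indicE.
have mgq : measurable_fun setT (fun x => g x * q x) by exact: measurable_funM.
have mg2q : measurable_fun setT (fun x => g x ^+ 2 * q x).
  by apply: measurable_funM => //; exact: measurable_funX.
have mSq : measurable_fun setT (fun x => \1_S x * q x).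
  by apply: measurable_funM => //; exact: measurable_indic.
have absB : (`|B| <= \int[mu]_x (`|g x| * q x)%:E)%E.
  have mE : measurable_fun setT (fun x => (g x * q x)%:E) by apply/measurable_EFinP.
  have := le_abse_integral mu measurableT mE; rewrite -/B => /le_trans; apply.
  rewrite le_eqVlt; apply/orP; left; apply/eqP; apply: eq_integral => x _.
  by rewrite /= normrM (ger0_norm (q0 x)).
have bnd s : 0 < s -> (\int[mu]_x (`|g x| * q x)%:E <= (a / (2 * s) + s / 4)%:E)%E.
  move=> s0.
  have s20 : 0 < (2 * s)^-1 by rewrite invr_gt0 mulr_gt0.
  have s2 : 0 < s / 2 by rewrite divr_gt0.
  apply: le_trans (_ : _ <= \int[mu]_x
     ((2 * s)^-1 * (g x ^+ 2 * q x) + s / 2 * (\1_S x * q x))%:E)%E _.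
    apply: int_mono => x; first by rewrite mulr_ge0.
    have [Sx|nSx] := boolP (x \in S).
      rewrite indicE Sx mul1r mulrA -mulrDl ler_wpM2r //.
      rewrite -[X in X <= _]add0r -lerBrDr.
      have -> : (2 * s)^-1 * g x ^+ 2 + s / 2 - `|g x| = (2 * s)^-1 * (`|g x| - s) ^+ 2.
        rewrite -[g x ^+ 2]real_normK ?num_real //; field; rewrite gt_eqF //.
      by rewrite mulr_ge0 // ?sqr_ge0 // ltW.
    have -> : g x = 0 by apply/eqP; apply: contraNT nSx => /gS; rewrite inE.
    rewrite normr0 mul0r; apply: addr_ge0; apply: mulr_ge0 => //; try exact: ltW.
      by rewrite expr0n /= mul0r.
    by rewrite mulr_ge0.
  rewrite (_ : (fun x => _) = (fun x => ((2 * s)^-1 * (g x ^+ 2 * q x))%:E +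
                                      (s / 2 * (\1_S x * q x))%:E)%E); last first.
    by apply/funext => x; rewrite EFinD.
  rewrite ge0_integralD //; first last.
  - by apply/measurable_EFinP; apply: measurable_funM => //; exact: measurable_cst.
  - by move=> x _; rewrite lee_fin; apply: mulr_ge0; [exact: ltW|apply: mulr_ge0].
  - by apply/measurable_EFinP; apply: measurable_funM => //; exact: measurable_cst.
  - by move=> x _; rewrite lee_fin; apply: mulr_ge0; [exact: ltW|apply: mulr_ge0; rewrite ?sqr_ge0].
  rewrite int_scale //; last by move=> x; rewrite mulr_ge0 // sqr_ge0.
  rewrite int_scale //; last by move=> x; rewrite mulr_ge0.
  rewrite -/A -/m Aa EFinD; apply: leeD.
    by rewrite -EFinM lee_fin mulrC.
  apply: le_trans (lee_wpmul2l _ mle) _; first by rewrite lee_fin ltW.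
  by rewrite -EFinM lee_fin le_eqVlt; apply/orP; left; apply/eqP; field.
have Bf : B \is a fin_num.
  rewrite fin_num_abs; apply: le_lt_trans (le_trans absB (bnd 1 ltr01)) _.
  by rewrite ltey.
set b := fine B.
have Bb : B = b%:E by rewrite /b fineK.
have hb : `|b| ^+ 2 <= a / 2.
  apply: amgm_sq => // s s0; rewrite -lee_fin.
  by move: absB; rewrite Bb => /le_trans; apply; apply: bnd.
rewrite real_normK ?num_real // in hb.
move: hP; rewrite Aa Bb -EFin_expe -EFinB -EFinM => hP.
apply: le_trans (lee_wpmul2l _ hP); last by rewrite lee_fin; lra.
rewrite -EFinM lee_fin mulrA -(mulrA 2) mulfV ?gt_eqF // mulr1.
lra.
Qed.

End KL.


Section pw.
Variable R : realType.

Lemma expR_bern (b y : R) : 0 <= b <= 1 -> expR (b * y) <= b * expR y + (1 - b).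
Proof.
move=> /andP[b0 b1].
have := convex_expR (Itv01 b0 b1) y 0.
by rewrite !convRE /= mulr0 addr0 expR0 mulr1.
Qed.

Variables (n : nat) (w : 'I_n.+1 -> R) (u : 'I_n.+1 -> R) (b : R).
Hypothesis wpos : forall i, 0 < w i.
Hypothesis wsum : \sum_i w i = 1.
Hypothesis hb : 0 < b <= 1.

Let mu := \sum_i w i * expR (- u i).

Lemma mu_gt0 : 0 < mu.
Proof.
rewrite /mu (bigD1 ord0) //= ltr_wpDr //; first by apply: sumr_ge0 => i _; rewrite mulr_ge0 // ?ltW // expR_ge0.
by rewrite mulr_gt0 // expR_gt0.
Qed.

Lemma P1 : expR (b * ln mu) <= \sum_i expR (- (b * u i)).
Proof.
have [/existsP [k hk]|/existsPn hk] := boolP [exists k, mu <= expR (- u k)].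
  apply: le_trans (_ : expR (- (b * u k)) <= _).
    rewrite ler_expR -mulrN ler_wpM2l //; first by case/andP: hb => /ltW.
    by rewrite -[X in _ <= X]expRK ler_ln // ?posrE ?mu_gt0 ?expR_gt0.
  by rewrite (bigD1 k) //= lerDl sumr_ge0 // => i _; rewrite expR_ge0.
exfalso.
have : mu < \sum_i w i * mu.
  rewrite /mu [X in X < _]big_mkcond /= [X in _ < X]big_mkcond /=.
  apply: ltr_sum; first by apply/hasP; exists ord0 => //; rewrite mem_index_enum.
  move=> i _; rewrite ltr_pM2l //.
  by have := hk i; rewrite -ltNge.
by rewrite -big_distrl /= wsum mul1r ltxx.
Qed.

Lemma P3w : \sum_i w i * expR (- (b * u i)) <= expR (b * ln mu).
Proof.
have m0 := mu_gt0.
have b01 : 0 <= b <= 1 by case/andP: hb => /ltW -> ->.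
set E := expR (b * ln mu).
have E0 : 0 < E by rewrite expR_gt0.
have h i : expR (- (b * u i)) <= E * (b * (expR (- u i) / mu) + (1 - b)).
  have -> : - (b * u i) = b * ln mu + b * (- u i - ln mu) by ring.
  rewrite expRD; apply: ler_wpM2l; first exact: ltW.
  apply: le_trans (expR_bern _ b01) _.
  by rewrite expRD (expRN (ln mu)) lnK ?posrE.
apply: le_trans (_ : \sum_i w i * (E * (b * (expR (- u i) / mu) + (1 - b))) <= _).
  by apply: ler_sum => i _; apply: ler_wpM2l; [exact: ltW|exact: h].
have -> : \sum_i w i * (E * (b * (expR (- u i) / mu) + (1 - b))) =
   E * (b / mu * (\sum_i w i * expR (- u i)) + (1 - b) * \sum_i w i).
  rewrite mulr_sumr mulr_sumr mulrDr !mulr_sumr -big_split /=.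
  by apply: eq_bigr => i _; ring.
rewrite wsum -/mu.
by rewrite mulfVK ?gt_eqF // mulr1 addrC subrK mulr1.
Qed.

Lemma P3 (wm : R) : 0 < wm -> (forall i, wm <= w i) ->
  \sum_i expR (- (b * u i)) <= wm^-1 * expR (b * ln mu).
Proof.
move=> wm0 hw.
apply: (@le_trans _ _ (wm^-1 * \sum_i w i * expR (- (b * u i)))); last first.
  by apply: ler_wpM2l; [rewrite invr_ge0 ltW|exact: P3w].
rewrite mulr_sumr; apply: ler_sum => i _.
rewrite mulrA -[X in X <= _]mul1r ler_wpM2r ?expR_ge0 //.
by rewrite ler_pdivlMl // mulr1.
Qed.

End pw.


Lemma cont_meas (R : realType) d (h : 'rV[R]_d -> R) :
  continuous h -> measurable_fun [set: Rd R d] (h : Rd R d -> R).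
Proof.
move=> /continuousP ch.
apply: (measurability _ (RGenOpens.measurableE R)).
move=> _ [_ [a [b ->] <-]].
rewrite setTI.
apply: sub_sigma_algebra.
apply: ch; exact: interval_open.
Qed.

Lemma ll_cont (R : realType) d (g : 'rV[R]_d -> R) :
  locally_lipschitz g -> continuous g.
Proof.
move=> hg x; have [r [L [r0 hL]]] := hg x.
apply/(cvgrPdist_le (FF := nbhs_filter x)) => e e0.
have L1 : 0 < `|L| + 1 by rewrite ltr_wpDl.
apply/nbhs_ballP; exists (Num.min r (e / (`|L| + 1)) : R).
  by rewrite /= lt_min r0 /= divr_gt0.
move=> y yb; have := yb; rewrite -ball_normE /ball_ /= lt_min => /andP[yr ye].
have bx : ball x r x by exact: ballxx.
have by_ : ball x r y by rewrite -ball_normE.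
apply: le_trans (hL _ _ bx by_) _.
apply: le_trans (_ : (`|L| + 1) * `|x - y| <= _).
  by rewrite ler_wpM2r // (le_trans (ler_norm _)) // lerDl.
by rewrite -ler_pdivlMl // mulrC ltW.
Qed.

End Helpers.
Import Helpers.

Lemma wmin_props (R : realType) n (w : 'I_n.+1 -> R) :
  (forall i, 0 < w i) -> \sum_i w i = 1 ->
  [/\ 0 < wmin w, forall i, wmin w <= w i, wmin w <= 1 & n.+1%:R * wmin w <= 1].
Proof.
move=> wp ws.
have le i : wmin w <= w i.
  rewrite /wmin (bigD1 i) //=.
  by rewrite ge_min lexx.
have w1 i : w i <= 1.
  by rewrite -ws (bigD1 i) //= lerDl sumr_ge0 // => j _; rewrite ltW.
split => //.
- rewrite /wmin; apply: (big_ind (fun x => 0 < x)) => //.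
  by move=> x y x0 y0; rewrite lt_min x0 y0.
- exact: le_trans (le ord0) (w1 ord0).
- have : \sum_(i < n.+1) wmin w <= \sum_i w i by apply: ler_sum => i _; exact: le.
  by rewrite sumr_const card_ord ws mulr_natl.
Qed.

Theorem mainTheorem8 (R : realType) (d n : nat)
  (lam : {measure set (Rd R d) -> \bar R}) (Hlam : is_lebesgue lam)
  (fs : 'I_n -> 'rV[R]_d -> R)
  (Hsmooth : forall i, smooth (fs i))
  (Hdens : forall i, (\int[lam]_x (expR (- fs i x))%:E = 1)%E)
  (Hint : forall i (b : R), 0 < b ->
     (\int[lam]_x (expR (- (b * fs i x)))%:E < +oo)%E)
  (w : 'I_n -> R) (Hwpos : forall i, 0 < w i) (Hwsum : \sum_(i < n) w i = 1)
  (beta : R) (Hbeta : 0 < beta <= 1)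
  (Zbeta : R)
  (HZ : forall i, (\int[lam]_x (expR (- (beta * fs i x)))%:E = Zbeta%:E)%E)
  (Cbeta : R) (HC : 0 < Cbeta)
  (HP : forall i, poincare lam (fun x => expR (- (beta * fs i x)) / Zbeta) Cbeta) :
  poincare_small_sets lam
    (tempered_density lam (mixture_potential w fs) beta)
    (2 * Cbeta / wmin w) (wmin w ^+ 2 / 2).
Proof.
destruct n as [|n].
  by move: Hwsum; rewrite big_ord0 => /eqP; rewrite eq_sym oner_eq0.
have [wm0 wmle wm1 nwm] := @wmin_props _ _ w Hwpos Hwsum.
set wm := wmin w in wm0 wmle wm1 nwm *.
set a := fun j x => expR (- (beta * fs j x)).
set e := fun x => expR (- (beta * mixture_potential w fs x)).
have b01 : 0 <= beta <= 1 by case/andP: Hbeta => /ltW -> ->.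
have eE x : e x = expR (beta * ln (\sum_i w i * expR (- fs i x))).
  by rewrite /e /mixture_potential mulrN opprK.
have pw1 x : e x <= \sum_j a j x by rewrite eE; exact: P1.
have pw3 x : \sum_j a j x <= wm^-1 * e x by rewrite eE; apply: P3.
have a0 j x : 0 < a j x by rewrite expR_gt0.
have e0 x : 0 < e x by rewrite expR_gt0.
have ale j x : a j x <= wm^-1 * e x.
  apply: le_trans (pw3 x); rewrite (bigD1 j) //= lerDl sumr_ge0 // => i _; exact: ltW.
have cf j : continuous (fs j).
  by move=> x; apply: differentiable_continuous; exact: (Hsmooth j [::] x).
have ca j : continuous (a j).
  move=> x; apply: continuous_comp; last exact: continuous_expR.
  by apply: (cvgN (FF := nbhs_filter x)); apply: (cvgM (FF := nbhs_filter x)); [exact: cvg_cst | exact: cf].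
have ma j : measurable_fun [set: Rd R d] (a j) by apply: cont_meas.
have intsplit (F : 'I_n.+1 -> 'rV[R]_d -> R) :
    (forall j, measurable_fun [set: Rd R d] (F j)) -> (forall j x, 0 <= F j x) ->
    (\int[lam]_x (\sum_j F j x)%:E = \sum_j \int[lam]_x (F j x)%:E)%E.
  move=> mF F0.
  under eq_integral do rewrite -sumEFin.
  rewrite ge0_integral_sum //.
  - by move=> j; apply/measurable_EFinP; exact: mF.
  - by move=> j x _; rewrite lee_fin.
have sumZ : (\sum_(j < n.+1) \int[lam]_x (a j x)%:E = (n.+1%:R * Zbeta)%:E)%E.
  under eq_bigr do rewrite /a HZ.
  by rewrite sumEFin sumr_const card_ord mulr_natl.
set Ztot := (\int[lam]_x (e x)%:E)%E.
have Zb0 : 0 <= Zbeta.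
  by rewrite -lee_fin -(HZ ord0); apply: integral_ge0 => x _; rewrite lee_fin expR_ge0.
have Ztot_up : (Ztot <= (n.+1%:R * Zbeta)%:E)%E.
  apply: (@le_trans _ _ (\int[lam]_x (\sum_j a j x)%:E)%E).
    by apply: int_mono => x; [exact: ltW | exact: pw1].
  by rewrite intsplit; [rewrite sumZ | exact: ma | move=> j x; exact: ltW].
have Ztot0 : (0 <= Ztot)%E by apply: integral_ge0 => x _; rewrite lee_fin expR_ge0.
have pE : tempered_density lam (mixture_potential w fs) beta = fun x => e x / fine Ztot by [].
rewrite /poincare_small_sets pE => g [gll gint] hS.
have G0 x : 0 <= grad_norm2 g x by apply: sumr_ge0 => i _; exact: sqr_ge0.
have [Zb00|Zbne] := eqVneq Zbeta 0.
  have Zt0 : Ztot = 0%E.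
    by apply/le_anti; rewrite Ztot0 andbT; move: Ztot_up; rewrite Zb00 mulr0.
  have p0 : (fun x => e x / fine Ztot) = fun _ => 0.
    by apply/funext => x; rewrite Zt0 /= invr0 mulr0.
  rewrite p0 /Defs.variance !integral0_eq; last 2 first.
  - by move=> x _; rewrite mulr0.
  - by move=> x _; rewrite mulr0.
  rewrite expe2 mule0 sube0 mule0; apply: integral_ge0 => x _.
  by rewrite lee_fin mulr0.
have Zbp : 0 < Zbeta by rewrite lt_def Zbne Zb0.
have Zlow : ((wm * Zbeta)%:E <= Ztot)%E.
  have h : (Zbeta%:E <= (wm^-1)%:E * Ztot)%E.
    rewrite -(HZ ord0) -int_scale; first last.
    - by move=> x; exact: ltW.
    - by rewrite invr_gt0.
    by apply: int_mono => x; [exact: expR_ge0 | exact: (ale ord0 x)].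
  rewrite EFinM; apply: le_trans (lee_wpmul2l _ h) _; first by rewrite lee_fin ltW.
  by rewrite muleA -EFinM mulfV ?gt_eqF // mul1e.
have Zfin : Ztot \is a fin_num.
  rewrite ge0_fin_numE //; apply: le_lt_trans Ztot_up _; exact: ltey.
set Zp := fine Ztot in pE *.
have ZtE : Ztot = Zp%:E by rewrite /Zp fineK.
have Zp_lo : wm * Zbeta <= Zp by rewrite -lee_fin -ZtE.
have Zp_up : Zp <= n.+1%:R * Zbeta by rewrite -lee_fin -ZtE.
have Zp0 : 0 < Zp by apply: lt_le_trans Zp_lo; rewrite mulr_gt0.
have ZpZ : Zp <= Zbeta / wm.
  rewrite ler_pdivlMr //; apply: le_trans (_ : n.+1%:R * Zbeta * wm <= _).
    by rewrite ler_wpM2r // ltW.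
  by rewrite mulrAC -[X in _ <= X]mul1r ler_wpM2r // ltW.
set p := fun x => e x / Zp.
have p0 x : 0 <= p x by rewrite /p divr_ge0 // ltW.
set S := supp g.
have mS : measurable (S : set (Rd R d)).
  rewrite -[S]setCK; apply: measurableC; apply: sub_sigma_algebra.
  by apply: closed_openC; exact: closed_closure.
have gS x : g x != 0 -> S x by move=> gx; apply: subset_closure.
have cg : continuous g by exact: ll_cont.
have mg : measurable_fun [set: Rd R d] (g : Rd R d -> R) by exact: cont_meas.
have mp : (\int[lam]_x (\1_S x * p x)%:E <= (wm ^+ 2 / 2)%:E)%E.
  apply: le_trans hS; rewrite /dmeasure (integral_mkcond S) le_eqVlt; apply/orP; left.
  apply/eqP; apply: eq_integral => x _; rewrite patchE indicE.
  by case: (x \in S); rewrite ?mul1r ?mul0r.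
set c := wm^-1 * Zp / Zbeta.
have c0 : 0 < c by rewrite /c divr_gt0 // mulr_gt0 // invr_gt0.
have cm : c * (wm ^+ 2 / 2) <= 2^-1.
  rewrite /c; have -> : wm^-1 * Zp / Zbeta * (wm ^+ 2 / 2) = Zp * wm / Zbeta / 2.
    by field; rewrite !gt_eqF.
  by rewrite -[X in _ <= X]mul1r ler_pM2r ?invr_gt0 // ler_pdivrMr // mul1r -ler_pdivlMr.
have KLj j : (\int[lam]_x (g x ^+ 2 * (a j x / Zbeta))%:E <=
      (2 * Cbeta)%:E * energy lam (fun x => a j x / Zbeta)%R g)%E.
  have qle x : a j x / Zbeta <= c * p x.
    have -> : c * p x = wm^-1 * e x / Zbeta by rewrite /c /p; field; rewrite !gt_eqF.
    by rewrite ler_pM2r ?invr_gt0 //; exact: ale.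
  have q0 x : 0 <= a j x / Zbeta by rewrite divr_ge0 // ltW.
  have mq : measurable_fun [set: Rd R d] (fun x => a j x / Zbeta).
    by apply: measurable_funM => //; exact: measurable_cst.
  have Ajle : (\int[lam]_x (g x ^+ 2 * (a j x / Zbeta))%:E <=
               c%:E * \int[lam]_x (g x ^+ 2 * p x)%:E)%E.
    rewrite -int_scale //; last by move=> x; rewrite mulr_ge0 // sqr_ge0.
    apply: int_mono => x; first by rewrite mulr_ge0 // sqr_ge0.
    by rewrite [X in _ <= X]mulrCA; apply: ler_wpM2l; [exact: sqr_ge0 | exact: qle].
  apply: (KL mq mg mS) => //.
  - apply: le_lt_trans Ajle _; apply: lte_mul_pinfty => //; first by rewrite lee_fin ltW.
  - apply: le_trans (_ : (c%:E * \int[lam]_x (\1_S x * p x)%:E <= _))%E.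
      rewrite -int_scale //; last by move=> x; rewrite mulr_ge0.
      apply: int_mono => x; first by rewrite mulr_ge0.
      by rewrite [X in _ <= X]mulrCA; apply: ler_wpM2l; [rewrite indicE | exact: qle].
    apply: le_trans (lee_wpmul2l _ mp) _; first by rewrite lee_fin ltW.
    by rewrite -EFinM lee_fin.
  - apply: (HP j g); split => //.
    apply: le_lt_trans Ajle _; apply: lte_mul_pinfty => //; first by rewrite lee_fin ltW.
have Ap_le : (\int[lam]_x (g x ^+ 2 * p x)%:E <= (Zbeta / Zp)%:E *
    \sum_j \int[lam]_x (g x ^+ 2 * (a j x / Zbeta))%:E)%E.
  have := intsplit (fun j x => g x ^+ 2 * (a j x / Zbeta)) _ _.
  move=> /= <-; first last.
  - by move=> j x; rewrite mulr_ge0 ?sqr_ge0 // divr_ge0 // ltW.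
  - move=> j; apply: measurable_funM; first exact: measurable_funX.
    by apply: measurable_funM => //; exact: measurable_cst.
  rewrite -int_scale; first last.
  - by move=> x; apply: sumr_ge0 => j _; rewrite mulr_ge0 ?sqr_ge0 // divr_ge0 // ltW.
  - by rewrite divr_gt0.
  apply: int_mono => x; first by rewrite mulr_ge0 ?sqr_ge0.
  have -> : Zbeta / Zp * (\sum_j g x ^+ 2 * (a j x / Zbeta)) =
            g x ^+ 2 * ((\sum_j a j x) / Zp).
    by rewrite -mulr_sumr -mulr_suml; field; rewrite !gt_eqF.
  apply: ler_wpM2l; first exact: sqr_ge0.
  by rewrite /p ler_pM2r ?invr_gt0.
have SE : (\sum_j energy lam (fun x => a j x / Zbeta)%R g <=
           (Zp / (wm * Zbeta))%:E * energy lam p g)%E.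
  rewrite /energy.
  apply: le_trans (@int_superadd_sum _ _ _ lam _ _ (fun j x => grad_norm2 g x * (a j x / Zbeta)) _) _.
    by move=> j x; rewrite mulr_ge0 // divr_ge0 // ltW.
  rewrite -int_scale; first last.
  - by move=> x; rewrite mulr_ge0.
  - by rewrite divr_gt0 // mulr_gt0.
  apply: int_mono => x; first by apply: sumr_ge0 => j _; rewrite mulr_ge0 // divr_ge0 // ltW.
  have -> : \sum_j grad_norm2 g x * (a j x / Zbeta) =
            grad_norm2 g x * ((\sum_j a j x) / Zbeta).
    by rewrite -mulr_sumr -mulr_suml.
  have -> : Zp / (wm * Zbeta) * (grad_norm2 g x * p x) =
            grad_norm2 g x * (wm^-1 * e x / Zbeta).
    by rewrite /p; field; rewrite !gt_eqF.
  apply: ler_wpM2l => //.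
  by rewrite ler_pM2r ?invr_gt0.
set Ep := energy lam p g.
set Ap := (\int[lam]_x (g x ^+ 2 * p x)%:E)%E in Ap_le *.
have V : (Defs.variance lam p g <= Ap)%E.
  by rewrite /Defs.variance -[X in (_ <= X)%E]sube0; apply: leeB => //; exact: sqre_ge0.
have Ej0 j : (0 <= energy lam (fun x => a j x / Zbeta)%R g)%E.
  by apply: integral_ge0 => x _; rewrite lee_fin mulr_ge0 // divr_ge0 // ltW.
have AS : (\sum_j \int[lam]_x (g x ^+ 2 * (a j x / Zbeta))%:E <=
    (2 * Cbeta)%:E * \sum_j energy lam (fun x => a j x / Zbeta)%R g)%E.
  rewrite ge0_sume_distrr; last by move=> j _; exact: Ej0.
  by apply: lee_sum => j _; exact: KLj.
have chain : (Ap <= (2 * Cbeta / wm)%:E * Ep)%E.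
  apply: le_trans Ap_le _.
  apply: le_trans (lee_wpmul2l _ AS) _; first by rewrite lee_fin divr_ge0 // ltW.
  rewrite muleA -EFinM.
  apply: le_trans (lee_wpmul2l _ SE) _.
    by rewrite lee_fin mulr_ge0 // ?divr_ge0 // ?mulr_ge0 // ltW.
  rewrite muleA -EFinM le_eqVlt; apply/orP; left; apply/eqP; congr (_%:E * _)%E.
  by field; rewrite !gt_eqF.
have c2 : 0 < 2 * Cbeta / wm by rewrite divr_gt0 // mulr_gt0.
apply: le_trans (lee_wpmul2l _ V) _; first by rewrite lee_fin invr_ge0 ltW.
apply: le_trans (lee_wpmul2l _ chain) _; first by rewrite lee_fin invr_ge0 ltW.
by rewrite muleA -EFinM mulVf ?gt_eqF // mul1e.
Qed.
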